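(* Let $\Lambda\in\mathcal H_I$ and $w$ a capacity. Then for all $X\in\mathcal X$, $$\Lambda\mathrm{VaR}^{w}(X)=\inf_{x\in\mathbb R}\{\mathrm{VaR}^w_{\Lambda(x)}(X)\vee x\}=\sup_{x\in\mathbb R}\{\mathrm{VaR}^w_{\Lambda(x)}(X)\wedge x\}$$ and $$\Lambda\mathrm{VaR}^{+,w}(X)=\inf_{x\in\mathbb R}\{\mathrm{VaR}^{+,w}_{\Lambda(x)}(X)\vee x\}=\sup_{x\in\mathbb R}\{\mathrm{VaR}^{+,w}_{\Lambda(x)}(X)\wedge x\},$$ where values in $[-\infty,\infty]$ are allowed.
   Context: Let $(\Omega,\mathcal F)$ be a measurable space and $\mathcal X$ a set of real-valued random variables on it containing all bounded ones. A capacity is a map $w:\mathcal F\to[0,1]$ with $w(\emptyset)=0$, $w(\Omega)=1$, and $A\subseteq B\Rightarrow w(A)\le w(B)$. For $\Lambda:\mathbb R\to[0,1]$: $\Lambda\mathrm{VaR}^w(X)=\inf\{x\in\mathbb R: w(X>x)\le\Lambda(x)\}$, $\Lambda\mathrm{VaR}^{+,w}(X)=\sup\{x\in\mathbb R: w(X>x)\ge\Lambda(x)\}$ ($\inf\emptyset=\infty$, $\sup\emptyset=-\infty$). For $p\in[0,1]$, the Choquet quantiles are $\mathrm{VaR}^w_p=\Lambda\mathrm{VaR}^w$ and $\mathrm{VaR}^{+,w}_p=\Lambda\mathrm{VaR}^{+,w}$ with the constant function $\Lambda\equiv p$. $\mathcal H_I$ is the set of increasing functions $\Lambda:\mathbb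 R\to(0,1)$. $a\vee b=\max(a,b)$, $a\wedge b=\min(a,b)$. *)

(* Defs.v *)
From HB Require Import structures.
From mathcomp Require Import all_boot all_order all_algebra.
From mathcomp Require Import all_classical all_reals all_analysis.
Set Implicit Arguments. Unset Strict Implicit. Unset Printing Implicit Defensive.
Import Order.TTheory GRing.Theory Num.Theory.
Local Open Scope classical_set_scope.
Local Open Scope ring_scope.

(* A capacity on the sigma-algebra of T: w : F -> [0,1], w(emptyset)=0,
   w(Omega)=1, monotone.  w is given on all of set T but only its values on
   measurable sets matter. *)
Definition capacity (d : measure_display) (T : measurableType d) (R : realType)
  (w : set T -> R) : Prop :=
  w set0 = 0 /\ w setT = 1 /\
  (forall A, measurable A -> 0 <= w A <= 1) /\
  (forall A B, measurable A -> measurable B -> A `<=` B -> w A <= w B).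

Definition LVaR (T : Type) (R : realType) (w : set T -> R) (L : R -> R)
  (X : T -> R) : \bar R :=
  ereal_inf [set x%:E | x in [set x : R | w [set t | x < X t] <= L x]].

Definition LVaRp (T : Type) (R : realType) (w : set T -> R) (L : R -> R)
  (X : T -> R) : \bar R :=
  ereal_sup [set x%:E | x in [set x : R | L x <= w [set t | x < X t]]].

Definition VaR (T : Type) (R : realType) (w : set T -> R) (p : R) (X : T -> R) :=
  LVaR w (fun _ => p) X.
Definition VaRp (T : Type) (R : realType) (w : set T -> R) (p : R) (X : T -> R) :=
  LVaRp w (fun _ => p) X.

Definition H_I (R : realType) (L : R -> R) : Prop :=
  (forall x y : R, x <= y -> L x <= L y) /\ (forall x, 0 < L x < 1).

(* Main.v *)
Require Import Defs.
From HB Require Import structures.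
From mathcomp Require Import all_boot all_order all_algebra.
From mathcomp Require Import all_classical all_reals all_analysis.
From mathcomp Require Import lra.
Import Order.TTheory GRing.Theory Num.Theory.
Local Open Scope classical_set_scope.
Local Open Scope ring_scope.

Section Gen.
Variable R : realType.
Variables (g L : R -> R).
Hypothesis gdec : forall x y, x <= y -> g y <= g x.
Hypothesis Linc : forall x y, x <= y -> L x <= L y.

Definition Sinf (p : R -> R) : \bar R :=
  ereal_inf [set x%:E | x in [set x : R | g x <= p x]].
Definition Ssup (p : R -> R) : \bar R :=
  ereal_sup [set x%:E | x in [set x : R | p x <= g x]].

Local Open Scope ereal_scope.

Lemma between (s a : \bar R) : s < a -> exists x : R, s < x%:E /\ x%:E < a.
Proof.
case: s => [s| |]; case: a => [a| |] //= H.
- exists ((s + a) / 2)%R; rewrite !lte_fin; rewrite lte_fin in H; split; lra.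
- by exists (s + 1)%R; rewrite lte_fin ltey; split => //; lra.
- by exists (a - 1)%R; rewrite ltNye lte_fin; split => //; lra.
- by exists 0%R; rewrite ltNye ltey.
Qed.

Lemma L1 : Sinf L = ereal_inf [set maxe (Sinf (fun _ => L x)) x%:E | x in [set: R]].
Proof.
apply/eqP; rewrite eq_le; apply/andP; split.
- apply/ereal_infP => _ [x _ <-].
  rewrite leNgt; apply/negP; rewrite gt_max => /andP[H1 H2].
  move/ereal_inf_ltP: H1 => [_ [y /= Hy <-] Hy2].
  have [xy|yx] := leP x y.
  + have : Sinf L <= y%:E.
      apply: ereal_inf_lbound; exists y => //=.
      apply: (le_trans Hy); exact: Linc.
    by rewrite leNgt Hy2.
  + have : Sinf L <= x%:E.
      apply: ereal_inf_lbound; exists x => //=.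
      apply: le_trans Hy; apply: gdec; exact: ltW.
    by rewrite leNgt H2.
- apply/ereal_infP => _ [x Sx <-].
  apply: ge_ereal_inf; exists x%:E => //; exists x => //.
  apply: max_r; apply: ereal_inf_lbound; by exists x.
Qed.

Lemma L2 : Sinf L = ereal_sup [set mine (Sinf (fun _ => L x)) x%:E | x in [set: R]].
Proof.
apply/eqP; rewrite eq_le; apply/andP; split; last first.
- apply/ereal_supP => _ [x _ <-].
  rewrite leNgt; apply/negP => /ereal_inf_ltP [_ [y /= Hy <-]].
  rewrite lt_min => /andP[H1 H2].
  have : Sinf (fun _ => L x) <= y%:E.
    apply: ereal_inf_lbound; exists y => //=.
    apply: (le_trans Hy); apply: Linc; rewrite -lee_fin; exact: ltW.
  by rewrite leNgt H1.
- rewrite leNgt; apply/negP => /between [x [H1 H2]].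
  have gx : (L x < g x)%R.
    rewrite ltNge; apply/negP => Hx.
    have : Sinf L <= x%:E by apply: ereal_inf_lbound; exists x.
    by rewrite leNgt H2.
  have Vx : x%:E <= Sinf (fun _ => L x).
    apply/ereal_infP => _ [y /= Hy <-].
    rewrite lee_fin leNgt; apply/negP => yx.
    have := le_trans (gdec _ _ (ltW yx)) Hy.
    by rewrite leNgt gx.
  have : x%:E <= ereal_sup [set mine (Sinf (fun _ => L x)) x%:E | x in [set: R]].
    apply: ereal_sup_ubound; exists x => //; exact: min_r.
  by rewrite leNgt H1.
Qed.

Lemma L3 : Ssup L = ereal_inf [set maxe (Ssup (fun _ => L x)) x%:E | x in [set: R]].
Proof.
apply/eqP; rewrite eq_le; apply/andP; split.
- apply/ereal_infP => _ [x _ <-].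
  rewrite leNgt; apply/negP => /ereal_sup_gtP [_ [y /= Hy <-]].
  rewrite gt_max => /andP[H1 H2].
  have : y%:E <= Ssup (fun _ => L x).
    apply: ereal_sup_ubound; exists y => //=.
    apply: le_trans Hy; apply: Linc; rewrite -lee_fin; exact: ltW.
  by rewrite leNgt H1.
- rewrite leNgt; apply/negP => /between [x [H1 H2]].
  have gx : (g x < L x)%R.
    rewrite ltNge; apply/negP => Hx.
    have : x%:E <= Ssup L by apply: ereal_sup_ubound; exists x.
    by rewrite leNgt H1.
  have Vx : Ssup (fun _ => L x) <= x%:E.
    apply/ereal_supP => _ [y /= Hy <-].
    rewrite lee_fin leNgt; apply/negP => yx.
    have := le_trans Hy (gdec _ _ (ltW yx)).
    by rewrite leNgt gx.
  have : ereal_inf [set maxe (Ssup (fun _ => L x)) x%:E | x in [set: R]] <= x%:E.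
    apply: ereal_inf_lbound; exists x => //; exact: max_r.
  by rewrite leNgt H2.
Qed.

Lemma L4 : Ssup L = ereal_sup [set mine (Ssup (fun _ => L x)) x%:E | x in [set: R]].
Proof.
apply/eqP; rewrite eq_le; apply/andP; split; last first.
- apply/ereal_supP => _ [x _ <-].
  rewrite leNgt; apply/negP; rewrite lt_min => /andP[H1 H2].
  move/ereal_sup_gtP: H1 => [_ [y /= Hy <-] Hy2].
  have [xy|yx] := leP x y.
  + have : x%:E <= Ssup L.
      apply: ereal_sup_ubound; exists x => //=.
      exact: (le_trans Hy (gdec _ _ xy)).
    by rewrite leNgt H2.
  + have : y%:E <= Ssup L.
      apply: ereal_sup_ubound; exists y => //=.
      apply: le_trans Hy; apply: Linc; exact: ltW.
    by rewrite leNgt Hy2.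
- apply/ereal_supP => _ [x Sx <-].
  apply: le_ereal_sup_tmp; exists x%:E => //; exists x => //.
  apply: min_r; apply: ereal_sup_ubound; by exists x.
Qed.

End Gen.
Arguments Sinf {R}. Arguments Ssup {R}.

Theorem mainTheorem3 (d : measure_display) (T : measurableType d) (R : realType)
  (w : set T -> R) (L : R -> R) (X : T -> R) :
  capacity w -> H_I L -> measurable_fun setT X ->
  (LVaR w L X = ereal_inf [set maxe (VaR w (L x) X) x%:E | x in [set: R]] /\
   LVaR w L X = ereal_sup [set mine (VaR w (L x) X) x%:E | x in [set: R]]) /\
  (LVaRp w L X = ereal_inf [set maxe (VaRp w (L x) X) x%:E | x in [set: R]] /\
   LVaRp w L X = ereal_sup [set mine (VaRp w (L x) X) x%:E | x in [set: R]]).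
Proof.
move=> [_ [_ [_ wmono]]] [Linc _] mX.
set g := fun x : R => w [set t | x < X t].
have mS : forall x : R, measurable [set t | x < X t].
  move=> x.
  rewrite (_ : [set t | x < X t] = X @^-1` `]x, +oo[%classic); last first.
    by apply/seteqP; split => t /=; rewrite in_itv /= andbT.
  rewrite -[X in measurable X]setTI; apply: mX => //.
have gdec : forall x y : R, x <= y -> g y <= g x.
  move=> x y xy; apply: wmono; [exact: mS|exact: mS|].
  - by move=> t /= yt; exact: le_lt_trans yt.
have E1 : LVaR w L X = Sinf g L by [].
have E2 : LVaRp w L X = Ssup g L by [].
have E3 : forall x, VaR w (L x) X = Sinf g (fun _ => L x) by [].
have E4 : forall x, VaRp w (L x) X = Ssup g (fun _ => L x) by [].
rewrite E1 E2.
under eq_imagel do rewrite E3.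
under [in X in _ /\ X]eq_imagel do rewrite E4.
split; split.
- exact: L1.
- exact: L2.
- exact: L3.
- exact: L4.
Qed.
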